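(* Let $X$ be a separable infinite-dimensional Banach space and $T_1,\dots,T_N\in B(X)$ with $N\ge2$. Suppose there exist an increasing sequence $(n_k)$ of positive integers, a dense set $X_0\subset X$ and maps $S_k:X_0\to X$ such that (i) $T_i^{n_k}x\to0$ as $k\to\infty$ for every $x\in X_0$ and $1\le i\le N$; and (ii) for each $\epsilon>0$, $K\in\mathbb{N}$ and $x_0\in X_0$ there exists $k\ge K$ with $\|S_k(x_0)\|<\epsilon$ and $\|T_i^{n_k}S_k(x_0)-x_0\|<\epsilon$ for all $1\le i\le N$. Then $T_1,\dots,T_N$ satisfy the Simultaneous Blow-up/Collapse Property, and hence are densely s-hypercyclic.
   Context: $T_1,\dots,T_N$ satisfy the Simultaneous Blow-up/Collapse Property if for all non-empty open $W,U,V\subset X$ with $0\in W$ there is $n\in\mathbb{N}$ with $W\cap T_1^{-n}(U)\cap\cdots\cap T_N^{-n}(U)\ne\emptyset$ and $V\cap T_1^{-n}(W)\cap\cdots\cap T_N^{-n}(W)\ne\emptyset$. A vector $x$ is s-hypercyclic for $T_1,\dots,T_N$ if the closure of $\{(T_1^nx,\dots,T_N^nx):n\in\mathbb{N}\}$ in $\oplus_{i=1}^NX$ contains the diagonal $\{(y,\dots,y):y\in X\}$; the operators are densely s-hypercyclic if the set of s-hypercyclic vectors is dense in $X$. *)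

(* Defs.v *)
From HB Require Import structures.
From mathcomp Require Import all_boot all_order all_algebra.
From mathcomp Require Import all_classical all_reals all_analysis.
Set Implicit Arguments. Unset Strict Implicit. Unset Printing Implicit Defensive.
Import Order.TTheory GRing.Theory Num.Theory.
Import numFieldNormedType.Exports.
Local Open Scope classical_set_scope.
Local Open Scope ring_scope.

Definition separable_space (T : topologicalType) : Prop :=
  exists D : set T, countable D /\ dense D.

Definition infinite_dimensional (R : numDomainType) (X : lmodType R) : Prop :=
  forall s : seq X, exists x : X,
    forall c : 'I_(size s) -> R, x != \sum_(i < size s) c i *: s`_i.

Definition SBCP (R : realType) (X : normedModType R) (N : nat)
    (T : 'I_N -> X -> X) : Prop :=
  forall W U V : set X,
    open W -> open U -> open V -> W 0 -> U !=set0 -> V !=set0 ->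
    exists n : nat, (0 < n)%N /\
      (W `&` [set x | forall i, U (iter n (T i) x)]) !=set0 /\
      (V `&` [set x | forall i, W (iter n (T i) x)]) !=set0.

Definition s_hypercyclic (R : realType) (X : normedModType R) (N : nat)
    (T : 'I_N -> X -> X) (x : X) : Prop :=
  [set ((fun _ : 'I_N => y) : {ptws 'I_N -> X}) | y in [set: X]] `<=`
  closure [set ((fun i : 'I_N => iter n (T i) x) : {ptws 'I_N -> X})
          | n in [set n : nat | (0 < n)%N]].

Definition densely_s_hypercyclic (R : realType) (X : normedModType R) (N : nat)
    (T : 'I_N -> X -> X) : Prop :=
  dense [set x : X | s_hypercyclic T x].

(* Main.v *)
Require Import Defs.
From HB Require Import structures.
From mathcomp Require Import all_boot all_order all_algebra.
From mathcomp Require Import all_classical all_reals all_analysis.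
From mathcomp Require Import lra.
Import Order.TTheory GRing.Theory Num.Theory.
Import numFieldNormedType.Exports.
Local Open Scope classical_set_scope.
Local Open Scope ring_scope.

Section Aux.
Context {R : realType} {X : normedModType R}.

Lemma open_ball_in (O : set X) (x : X) : open O -> O x ->
  exists2 e : R, 0 < e & forall y, `|x - y| < e -> O y.
Proof.
move=> oO Ox.
have /nbhs_normP[e e0 He] : nbhs x O by apply: open_nbhs_nbhs.
by exists e => // y hy; apply: He.
Qed.

Lemma dense_pick (S O : set X) : dense S -> open O -> O !=set0 ->
  exists s, O s /\ S s.
Proof. by move=> dS oO nO; have [s [Os Ss]] := dS O nO oO; exists s. Qed.

Lemma iter_cont (f : X -> X) n : continuous f -> continuous (iter n f).
Proof.
move=> cf; elim: n => [|n IH] x /=; first exact: cvg_id.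
by apply: continuous_comp; [exact: IH | exact: cf].
Qed.

Lemma iter_linD (f : {linear X -> X}) n a b :
  iter n f (a + b) = iter n f a + iter n f b.
Proof. by elim: n => [|n IH] //=; rewrite IH raddfD. Qed.

End Aux.
Arguments open_ball_in {R X O x}.
Arguments dense_pick {R X S O}.

Theorem theorem3p1 (R : realType) (X : completeNormedModType R)
  (N : nat) (T : 'I_N -> {linear X -> X})
  (n : nat -> nat) (X0 : set X) (S : nat -> X -> X) :
  separable_space X ->
  infinite_dimensional X ->
  (2 <= N)%N ->
  (forall i, continuous (T i)) ->
  (forall k, (0 < n k)%N) ->
  (forall k, (n k < n k.+1)%N) ->
  dense X0 ->
  (forall x, X0 x -> forall i,
      (fun k => iter (n k) (T i) x) @ \oo --> (0 : X)) ->
  (forall (eps : R) (K : nat) (x0 : X), 0 < eps -> X0 x0 ->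
      exists k : nat, (K <= k)%N /\ `|S k x0| < eps /\
        (forall i, `|iter (n k) (T i) (S k x0) - x0| < eps)) ->
  SBCP (fun i => (T i : X -> X)) /\ densely_s_hypercyclic (fun i => (T i : X -> X)).
Proof.
move=> sep _ _ Tc npos _ dX0 conv hS.
have Kb : forall v, X0 v -> forall d : R, 0 < d -> exists K, forall k, (K <= k)%N ->
    forall i, `|iter (n k) (T i) v| < d.
  move=> v Xv d d0.
  have := filter_forall _ (fun i => cvgr0_norm_lt _ (conv v Xv i) d d0).
  by case=> K _ HK; exists K => k Kk; apply: HK.
split.
  move=> W U V oW oU oV W0 [u0 Uu0] nV.
  have [dw dw0 HW] := open_ball_in oW W0.
  have [u [Uu X0u]] := dense_pick dX0 oU (ex_intro _ u0 Uu0).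
  have [ru ru0 HU] := open_ball_in oU Uu.
  have [v [Vv X0v]] := dense_pick dX0 oV nV.
  have [K HK] := Kb v X0v dw dw0.
  have [k [Kk [Sk Tk]]] := hS (Num.min dw ru) K u (ltac:(by rewrite lt_min dw0 ru0)) X0u.
  exists (n k); split; first exact: npos.
  split.
    exists (S k u); split.
      apply: HW; rewrite sub0r normrN; by move: Sk; rewrite lt_min => /andP[].
    move=> i; apply: HU; rewrite distrC; by move: (Tk i); rewrite lt_min => /andP[].
  exists v; split => // i; apply: HW; rewrite sub0r normrN; exact: HK.
case: sep => D [cD dD].
have /pcard_surjP[g gs] := cD.
pose r (m : nat) : R := m.+1%:R^-1.
have r0 : forall m, 0 < r m by move=> m; rewrite /r invr_gt0 ltr0n.
pose E (d : X) (m : nat) := [set x : X | exists2 p, (0 < p)%N &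
   forall i, `|iter p (T i) x - d| < r m].
pose F (k : nat) := if @unpickle (prod nat nat) k is Some (j, m) then E (g j) m else setT.
have oE : forall d m, open (E d m).
  move=> d m; rewrite openE => x [p p0 Hp].
  have H : forall i, \forall z \near x, `|iter p (T i) z - d| < r m.
    move=> i.
    have := (cvgrPdist_lt _ _).1 (iter_cont _ p (Tc i) x) (r m - `|iter p (T i) x - d|).
    rewrite subr_gt0 => /(_ (nbhs_filter x) (Hp i)); apply: filterS => z hz.
    have -> : iter p (T i) z - d = (iter p (T i) z - iter p (T i) x) + (iter p (T i) x - d)
      by rewrite addrA subrK.
    rewrite distrC in hz.
    have := ler_normD (iter p (T i) z - iter p (T i) x) (iter p (T i) x - d).
    lra.
  have := filter_forall (nbhs_filter x) H; apply: filterS => z hz.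
  by exists p.
have dE : forall d m, dense (E d m).
  move=> d m O nO oO.
  have [v [Ov X0v]] := dense_pick dX0 oO nO.
  have [dv dv0 HO] := open_ball_in oO Ov.
  have r20 : 0 < r m / 2 by rewrite divr_gt0.
  have r40 : 0 < r m / 4 by rewrite divr_gt0.
  have [u [Bu X0u]] := dense_pick dX0 (ball_open d (r m / 2)) (ex_intro _ d (ballxx d r20)).
  rewrite -ball_normE /= in Bu.
  have [K HK] := Kb v X0v _ r40.
  have [k [Kk [Sk Tk]]] := hS (Num.min dv (r m / 4)) K u (ltac:(by rewrite lt_min dv0 r40)) X0u.
  move: Sk; rewrite lt_min => /andP[Sk1 Sk2].
  exists (v + S k u); split.
    apply: HO; by rewrite opprD addrA subrr sub0r normrN.
  exists (n k) => // i; rewrite iter_linD.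
  have -> : iter (n k) (T i) v + iter (n k) (T i) (S k u) - d =
    iter (n k) (T i) v + (iter (n k) (T i) (S k u) - u) + (u - d)
    by rewrite !addrA subrK.
  have h1 := ler_normD (iter (n k) (T i) v + (iter (n k) (T i) (S k u) - u)) (u - d).
  have h2 := ler_normD (iter (n k) (T i) v) (iter (n k) (T i) (S k u) - u).
  have h3 := HK k Kk i.
  have := Tk i; rewrite lt_min => /andP[_ h4].
  rewrite distrC in Bu.
  lra.
have odF : forall k, open (F k) /\ dense (F k).
  move=> k; rewrite /F; case: unpickle => [[j m]|]; first by split; [exact: oE|exact: dE].
  split; first exact: openT.
  by move=> O [x Ox] _; exists x.
have HB := Baire odF.
move=> O nO oO; have [x [Ox Gx]] := HB O nO oO; exists x; split => //.
move=> p [y _ <-].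
have hseq : forall j, exists q, (0 < q)%N /\ forall i, `|iter q (T i) x - y| < 2 * r j.
  move=> j.
  have [d [Bd Dd]] := dense_pick dD (ball_open y (r j)) (ex_intro _ y (ballxx y (r0 j))).
  rewrite -ball_normE /= in Bd.
  have [a _ ga] := gs d Dd.
  have := Gx (pickle (a, j)) I; rewrite /F pickleK ga => -[q q0 Hq].
  exists q; split => // i.
  have -> : iter q (T i) x - y = (iter q (T i) x - d) + (d - y) by rewrite addrA subrK.
  have h1 := ler_normD (iter q (T i) x - d) (d - y).
  have h2 := Hq i.
  rewrite distrC in Bd.
  lra.
case: (choice hseq) => s Hs.
apply: (@closed_cvg _ _ \oo _ (fun j => ((fun i => iter (s j) (T i) x) : {ptws 'I_N -> X}))).
- exact: closed_closure.
- apply: nearW => j; apply: subset_closure; exists (s j) => //; exact: (Hs j).1.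
- have Hc : forall t, (fun j => iter (s j) (T t) x) @ \oo --> y.
    move=> t; apply/cvgrPdist_lt => e e0.
    have e20 : 0 < e / 2 by rewrite divr_gt0.
    have := near_infty_natSinv_lt (PosNum e20); apply: filterS => j hj /=.
    rewrite distrC; have := (Hs j).2 t; rewrite /r /=; move: hj => /=; set z := (j.+1%:R^-1 : R); lra.
  apply/cvg_sup => t.
  rewrite cvg_image; last by rewrite eqEsubset; split=> v // _; exists (cst v).
  apply: cvg_trans (Hc t) => W /=; rewrite nbhs_simpl; exists (@^~ t @^-1` W) => //.
  by rewrite image_preimage // eqEsubset; split=> // j _; exists (fun _ => j).
Qed.
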